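(* Let $\kappa \ge 1$ be an integer and let $J_m$ denote the nilpotent Jordan cell of size $m$ (the $m\times m$ matrix with ones on the superdiagonal and zeros elsewhere). Then both $J_\kappa \oplus J_\kappa \in \mathcal{B}(\mathbb{C}^{2\kappa})$ and $J_{\kappa+1} \oplus J_\kappa \in \mathcal{B}(\mathbb{C}^{2\kappa+1})$ can be written as $MN - NM$ with $M, N$ operators on the respective space satisfying $M^2 = 0 = N^2$. *)

(* Defs.v *)
From HB Require Import structures.
From mathcomp Require Import all_boot all_order all_algebra.
Set Implicit Arguments. Unset Strict Implicit. Unset Printing Implicit Defensive.
Import GRing.Theory Num.Theory.
Local Open Scope ring_scope.

Definition jordan_cell (R : nzRingType) (m : nat) : 'M[R]_m :=
  \matrix_(i < m, j < m) (if (nat_of_ord j == (nat_of_ord i).+1)%N then 1 else 0).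

Definition mx_dsum (R : nzRingType) (m n : nat) (A : 'M[R]_m) (B : 'M[R]_n)
  : 'M[R]_(m + n) := block_mx A 0 0 B.

Definition sqzero_commutator (R : nzRingType) (n : nat) (T : 'M[R]_n) : Prop :=
  exists M N : 'M[R]_n,
    M *m M = 0 /\ N *m N = 0 /\ M *m N - N *m M = T.

(* Main.v *)
Require Import Defs.
From HB Require Import structures.
From mathcomp Require Import all_boot all_order all_algebra.
From mathcomp Require Import zify.
Local Open Scope ring_scope.
Import GRing.Theory.

Lemma sign_sq (R : nzRingType) (l : nat) : (-1) ^+ l * (-1) ^+ l = 1 :> R.
Proof. by rewrite -expr2 sqrr_sign. Qed.

Lemma sum_delta (R : nzRingType) n (i : nat) (F : 'I_n -> R) (c : R) :
  (forall l : 'I_n, (l : nat) = i -> F l = c) ->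
  \sum_(l < n) (if (l : nat) == i then F l else 0) =
  if (i < n)%N then c else 0.
Proof.
move=> Hc; rewrite -big_mkcond /=.
case: ifP => hi.
  rewrite (big_pred1 (Ordinal hi)); first by apply: Hc.
  by move=> l /=; rewrite -val_eqE.
rewrite big_pred0 // => l; apply/negbTE/eqP => E.
by move: (ltn_ord l); rewrite E hi.
Qed.

Definition Amx (R : nzRingType) m n : 'M[R]_(m, n) :=
  \matrix_(i < m, j < n) (if (i : nat) == j then (-1) ^+ j else 0).
Definition Bmx (R : nzRingType) n m : 'M[R]_(n, m) :=
  \matrix_(i < n, j < m) (if (j : nat) == i.+1 then (-1) ^+ i else 0).

Lemma AB (R : nzRingType) m n : (m <= n.+1)%N ->
  Amx R m n *m Bmx R n m = jordan_cell R m.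
Proof.
move=> hmn; apply/matrixP => i j; rewrite !mxE.
rewrite (eq_bigr (fun l : 'I_n => if (l : nat) == i then
   (if (j : nat) == i.+1 then 1 else 0) else 0)).
  rewrite (@sum_delta _ _ _ _ (if (j : nat) == i.+1 then 1 else 0)) //; case: ifP => // hi.
  case: eqP => // E; move: (ltn_ord j); rewrite E; lia.
move=> l _; rewrite !mxE eq_sym; case: eqP => [->|]; last by rewrite mul0r.
case: eqP => _; last by rewrite mulr0.
exact: sign_sq.
Qed.

Lemma BA (R : nzRingType) m n : (n <= m)%N ->
  Bmx R n m *m Amx R m n = - jordan_cell R n.
Proof.
move=> hnm; apply/matrixP => i j; rewrite !mxE.
rewrite (eq_bigr (fun l : 'I_m => if (l : nat) == j then
   - (if (j : nat) == i.+1 then 1 else 0) else 0)).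
  rewrite (@sum_delta _ _ _ _ (- (if (j : nat) == i.+1 then 1 else 0))) //.
  by rewrite (leq_trans (ltn_ord j) hnm).
move=> l _; rewrite !mxE.
case: (eqVneq (l : nat) j) => [->|_]; last by rewrite mulr0.
case: (eqVneq (j : nat) i.+1) => [->|_]; last by rewrite mul0r oppr0.
by rewrite exprS mulN1r mulrN sign_sq.
Qed.

Lemma key (R : nzRingType) m n (A : 'M[R]_(m, n)) (B : 'M[R]_(n, m)) X Y :
  A *m B = X -> B *m A = - Y -> sqzero_commutator (mx_dsum X Y).
Proof.
move=> hAB hBA.
exists (block_mx 0 A 0 0), (block_mx 0 0 B 0).
rewrite !mulmx_block !mul0mx !mulmx0 !addr0 !add0r.
split; first by rewrite block_mx0.
split; first by rewrite block_mx0.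
rewrite /mx_dsum opp_block_mx add_block_mx hAB hBA !oppr0 !addr0 add0r opprK.
by [].
Qed.

(* Stated over an arbitrary numClosedFieldType C (the complex numbers are one). *)
Theorem proposition3p13 (C : numClosedFieldType) (k : nat) (hk : (1 <= k)%N) :
  sqzero_commutator (mx_dsum (jordan_cell C k) (jordan_cell C k)) /\
  sqzero_commutator (mx_dsum (jordan_cell C k.+1) (jordan_cell C k)).
Proof.
split.
  exact: (@key C k k _ _ _ _ (AB C k k (leqnSn k)) (BA C k k (leqnn k))).
exact: (@key C k.+1 k _ _ _ _ (AB C k.+1 k (leqnn _)) (BA C k.+1 k (leqnSn k))).
Qed.
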